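(* Consider an instance of the Side-Access Compact Retrieval Problem, a feasible solution, a cycle $c$ of it, and the set $Y$ of targets retrieved in cycle $c$. List the distinct heights $\{h_c(b):b\in Y\}$ in increasing order as $h_1<\dots<h_p$ and let $s_i=\max\{s(b): b\in Y,\ h_c(b)=h_i\}$. Then there exists an index $\ell\in\{1,\dots,p\}$ such that $s_1\le s_2\le\dots\le s_\ell\ge s_{\ell+1}\ge\dots\ge s_p$.
   Context: A slice is a sequence of stacks $T=(1,\dots,m)$, indexed from the entry side (stack $1$) outward; ''left'' means smaller index. Stack $t$ initially consists of $h(t)\ge0$ unit loads (ULs) stacked without gaps; a UL at height $k$ has exactly $k$ ULs below it in its stack. A pick-list $\mathcal B$ of target ULs is given; target $b$ lies in stack $s(b)$ at initial height $h(b)$. Retrieval proceeds in cycles $c=1,2,\dots$; $h_c(t)$, $h_c(b)$ are the heights of stack $t$ and of a not-yet-retrieved target $b$ at the start of cycle $c$ ($h_1=h$). In cycle $c$ one chooses clearance levels $\ell_c(t)\in\{0,\dots,h_c(t)\}$: the top $e_c(t)=h_c(t)-\ell_c(t)$ ULs of stack $t$ are lifted for the whole cycle. Then a sequence $(b_{c,1},\dots,b_{c,k})$ of targets is retrieved, with residual heights $d_{c,0}=\ell_c$ and $d_{c,i}(t)=d_{c,i-1}(t)-1$ if $t=s(b_{c,i})$, else unchanged. Retrieving $b$ (stack $t$, height $h=h_c(b)$) as the $i$-th retrieval requires accessibility: (a) $d_{c,i-1}(t)=h+1$ and (b) $d_{c,i-1}(t')=h$ for all $t'<t$. Afterwards lifted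 ULs are lowered, $h_{c+1}(t)=d_{c,k}(t)+e_c(t)$, and each remaining target's height decreases by the number of targets retrieved in cycle $c$ below it in its stack. Non-targets are never removed. A solution is feasible if every target is retrieved exactly once and is accessible when retrieved. *)

(* Defs.v *)
From mathcomp Require Import all_boot.
Set Implicit Arguments. Unset Strict Implicit. Unset Printing Implicit Defensive.

(* Stacks are indexed by nat, stack t with 1 <= t <= m ("left" = smaller).
   Targets form a finite type B (the pick-list); s b is the stack of b,
   hb b its initial height.  A state (at the start of a cycle) is a pair
   (H, HT): H t = current height of stack t, HT b = current height of
   target b.  A cycle is a pair (l, Y): l t = clearance level of stack t,
   Y = the sequence of targets retrieved in that cycle, in order. *)

Section SACRP.
Variable B : finType.
Variable s : B -> nat.

Definition ret_state := ((nat -> nat) * (B -> nat))%type.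
Definition ret_cycle := ((nat -> nat) * seq B)%type.

Definition dres (l : nat -> nat) (pre : seq B) (t : nat) : nat :=
  l t - count (fun b => s b == t) pre.

Definition cycle_ok (m : nat) (st : ret_state) (cy : ret_cycle) : Prop :=
  let: (H, HT) := st in
  let: (l, Y) := cy in
  (forall t, 1 <= t <= m -> l t <= H t) /\
  (forall i, i < size Y ->
     forall b, b = nth b Y i ->
       dres l (take i Y) (s b) = (HT b).+1 /\
       (forall t', 1 <= t' < s b -> dres l (take i Y) t' = HT b)).

Definition next_state (st : ret_state) (cy : ret_cycle) : ret_state :=
  let: (H, HT) := st in
  let: (l, Y) := cy in
  (fun t => dres l Y t + (H t - l t),
   fun b => HT b - count (fun b' => (s b' == s b) && (HT b' < HT b)) Y).

(* state at the start of cycle c+1 (0-based c) *)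
Definition state_at (st0 : ret_state) (sol : seq ret_cycle) (c : nat) : ret_state :=
  foldl next_state st0 (take c sol).

Definition feasible (m : nat) (st0 : ret_state) (sol : seq ret_cycle) : Prop :=
  perm_eq (flatten (map snd sol)) (enum B) /\
  forall c, c < size sol -> forall cy, cy = nth cy sol c ->
    cycle_ok m (state_at st0 sol c) cy.

End SACRP.

(* Main.v *)
Require Import Defs.
From mathcomp Require Import all_boot.
From mathcomp Require Import zify.

Lemma find_jth (T : Type) (P : pred T) (x0 : T) (Y : seq T) j :
  j < count P Y -> exists2 i, i < size Y & P (nth x0 Y i) && (count P (take i Y) == j).
Proof.
elim: Y j => [|a Y IH] j //=.
case Pa: (P a) => /=.
  case: j => [|j] Hj; first by exists 0; rewrite //= Pa.
  have [i Hi /andP[H1 /eqP H2]] := IH j Hj.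
  by exists i.+1 => //=; rewrite H1 /= Pa H2.
rewrite add0n => Hj; have [i Hi /andP[H1 /eqP H2]] := IH j Hj.
by exists i.+1 => //=; rewrite H1 /= Pa H2.
Qed.

Lemma count_take_le (T : Type) (P : pred T) (Y : seq T) i :
  count P (take i Y) <= count P Y.
Proof. by rewrite -{2}(cat_take_drop i Y) count_cat leq_addr. Qed.

Lemma bigmax_attained (I : eqType) (r : seq I) (P : pred I) (F : I -> nat) b0 :
  b0 \in r -> P b0 -> exists2 b, b \in r & P b && (F b == \max_(i <- r | P i) F i).
Proof.
elim: r b0 => [|a r IH] b0 //; rewrite big_cons => Hin Pb0.
case: (boolP (has P r)) => [/hasP[b1 Hb1 Pb1]|Hn].
  have [b Hb /andP[Pb /eqP Fb]] := IH _ Hb1 Pb1.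
  case Pa: (P a).
    case: (leqP (\max_(i <- r | P i) F i) (F a)) => H.
      by exists a; rewrite ?inE ?eqxx ?Pa //= (maxn_idPl H).
    by exists b; rewrite ?inE ?Hb ?orbT ?Pb //= ?(maxn_idPr (ltnW H)) ?Fb.
  by exists b; rewrite ?inE ?Hb ?orbT ?Pb //= Fb.
have Pa : P a.
  move: Hin; rewrite inE => /predU1P[<-//|Hr].
  by move/hasPn: Hn => /(_ _ Hr); rewrite Pb0.
have -> : \max_(i <- r | P i) F i = 0.
  rewrite big_seq_cond big1 // => i /andP[Hi Pi].
  by move/hasPn: Hn => /(_ _ Hi); rewrite Pi.
by exists a; rewrite ?inE ?eqxx ?Pa //= maxn0.
Qed.

Lemma argmax_nat (f : nat -> nat) p : 0 < p -> exists2 l, l < p & forall i, i < p -> f i <= f l.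
Proof.
elim: p => [|p IH] // _.
case: p IH => [|p] IH.
  by exists 0 => // i; rewrite ltnS leqn0 => /eqP->.
have [l Hl Hmax] := IH isT.
case: (leqP (f p.+1) (f l)) => H.
  exists l; first by lia.
  move=> i; rewrite ltnS leq_eqVlt => /orP[/eqP->//|]; exact: Hmax.
exists p.+1 => // i; rewrite ltnS leq_eqVlt => /orP[/eqP->//|Hi].
by apply: leq_trans (Hmax _ Hi) (ltnW H).
Qed.

Lemma unimodal (f : nat -> nat) p : 0 < p ->
  (forall i j k, i < j -> j < k -> k < p -> f j < f i -> f j < f k -> False) ->
  exists l, l < p /\ (forall i, i < l -> f i <= f i.+1) /\
    (forall i, l <= i -> i.+1 < p -> f i.+1 <= f i).
Proof.
move=> Hp NV; have [l Hl Hmax] := @argmax_nat f p Hp.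
exists l; split=> //; split.
  move=> i Hi; rewrite leqNgt; apply/negP => H.
  case: (ltnP i.+1 l) => H2.
    apply: (NV i i.+1 l) => //; apply: leq_trans H (Hmax i _); lia.
  have := Hmax i (ltn_trans Hi Hl); have E : l = i.+1 by lia.
  subst l; lia.
move=> i Hi Hi1; rewrite leqNgt; apply/negP => H.
case: (ltnP l i) => H2.
  apply: (NV l i i.+1) => //; apply: leq_trans H (Hmax _ Hi1).
have E : l = i by lia.
have := Hmax i.+1 Hi1; subst l; lia.
Qed.

Theorem lemma3 (m : nat) (h0 : nat -> nat) (B : finType)
  (s : B -> nat) (hb : B -> nat)
  (Hs : forall b, 1 <= s b <= m)
  (Hhb : forall b, hb b < h0 (s b))
  (Hpos : forall b b', s b = s b' -> hb b = hb b' -> b = b')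
  (sol : seq (ret_cycle B))
  (Hfeas : feasible s m (h0, hb) sol)
  (c : nat) (Hc : c < size sol) (cy : ret_cycle B) (Hcy : cy = nth cy sol c)
  (HY : cy.2 <> [::]) :
  let HT := (state_at s (h0, hb) sol c).2 in
  let Y := cy.2 in
  let hs := sort leq (undup [seq HT b | b <- Y]) in
  let p := size hs in
  let si := fun i => \max_(b <- Y | HT b == nth 0 hs i) s b in
  exists l, l < p /\
    (forall i, i < l -> si i <= si i.+1) /\
    (forall i, l <= i -> i.+1 < p -> si i.+1 <= si i).
Proof.
have Hok := Hfeas.2 c Hc cy Hcy.
move: Hok.
case: (state_at s (h0, hb) sol c) => H HT.
case: cy Hcy HY => lv Y Hcy HY /= [_ Hacc].
have [x0 Hx0] : exists x0 : B, x0 \in Y by case: (Y) HY => // a l _; exists a; rewrite inE eqxx.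
have F : forall b, b \in Y ->
   lv (s b) - count (fun b' => s b' == s b) (take (index b Y) Y) = (HT b).+1 /\
   (forall t', 1 <= t' < s b -> lv t' - count (fun b' => s b' == t') (take (index b Y) Y) = HT b).
  move=> b Hb; apply: (Hacc (index b Y)); [by rewrite index_mem | by rewrite nth_index].
have Int : forall t j, j < count (fun b => s b == t) Y ->
    exists2 w, w \in Y & (s w == t) && (HT w == lv t - 1 - j).
  move=> t j Hj.
  have [i Hi /andP[Hs' /eqP Hc']] := @find_jth _ _ x0 _ _ Hj.
  have [A1 _] := Hacc i Hi (nth x0 Y i) (set_nth_default (nth x0 Y i) x0 Hi).
  exists (nth x0 Y i); first exact: mem_nth.
  rewrite Hs' /=; move/eqP: Hs' => Hs'.
  rewrite /dres Hs' Hc' in A1; apply/eqP; lia.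
have Valley : forall x y z, x \in Y -> y \in Y -> z \in Y ->
    HT z < HT y -> HT y < HT x -> s y < s z -> s y < s x ->
    exists2 w, w \in Y & (HT w == HT y) && (s y < s w).
  move=> x y z Hx Hy Hz H1 H2 H3 H4.
  have [Fx1 Fx2] := F x Hx; have [Fz1 Fz2] := F z Hz.
  case: (leqP (s z) (s x)) => Hzx.
    have Hge : HT x <= lv (s z).
      move: Hzx; rewrite leq_eqVlt => /orP[/eqP E|Hlt].
        by move: Fx1; rewrite -E; lia.
      have := Fx2 (s z); have := Hs z; lia.
    have Hct := @count_take_le _ (fun b' => s b' == s z) Y (index z Y).
    have [w Hw /andP[/eqP Hsw /eqP Hhw]] := Int (s z) (lv (s z) - 1 - HT y) ltac:(lia).
    exists w => //; apply/andP; split; [apply/eqP; lia | rewrite Hsw //].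
  have Hct := @count_take_le _ (fun b' => s b' == s x) Y (index z Y).
  have Hsx := Hs x.
  have Fz := Fz2 (s x) ltac:(lia).
  have [w Hw /andP[/eqP Hsw /eqP Hhw]] := Int (s x) (lv (s x) - 1 - HT y) ltac:(lia).
  exists w => //; apply/andP; split; [apply/eqP; lia | rewrite Hsw //].
pose hs := sort leq (undup [seq HT b | b <- Y]). pose p := size hs.
pose si := fun i => \max_(b <- Y | HT b == nth 0 hs i) s b.
change (exists l, l < p /\ (forall i, i < l -> si i <= si i.+1) /\
  (forall i, l <= i -> i.+1 < p -> si i.+1 <= si i)).
have Hsort : sorted ltn hs.
  by rewrite ltn_sorted_uniq_leq sort_uniq undup_uniq sort_sorted //; exact: leq_total.
have Hinc : forall i j, i < j -> j < p -> nth 0 hs i < nth 0 hs j.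
  move=> i j Hij Hj; apply: (sorted_ltn_nth ltn_trans 0 Hsort) => //; rewrite inE //.
  exact: ltn_trans Hij Hj.
have Att : forall i, i < p -> exists2 b, b \in Y & (HT b == nth 0 hs i) && (s b == si i).
  move=> i Hi.
  have : nth 0 hs i \in [seq HT b | b <- Y] by rewrite -mem_undup -(mem_sort leq) mem_nth.
  case/mapP => b0 Hb0 E.
  exact: (@bigmax_attained _ Y (fun b => HT b == nth 0 hs i) s b0 Hb0 (introT eqP (esym E))).
have Bnd : forall i b, b \in Y -> HT b = nth 0 hs i -> s b <= si i.
  move=> i b Hb E; exact: (leq_bigmax_seq b Hb (introT eqP E)).
have Hp : 0 < p.
  have : HT x0 \in hs.
    by rewrite /hs mem_sort mem_undup map_f.
  by rewrite /p; case: (hs).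
apply: unimodal => // i j k Hij Hjk Hkp H1 H2.
have [z Hz /andP[/eqP Ez /eqP Sz]] := Att i (ltn_trans Hij (ltn_trans Hjk Hkp)).
have [y Hy /andP[/eqP Ey /eqP Sy]] := Att j (ltn_trans Hjk Hkp).
have [x Hx /andP[/eqP Ex /eqP Sx]] := Att k Hkp.
have [w Hw /andP[/eqP Ew Sw]] := Valley x y z Hx Hy Hz
  ltac:(rewrite Ez Ey; apply: Hinc => //; exact: ltn_trans Hjk Hkp)
  ltac:(rewrite Ey Ex; exact: Hinc) ltac:(by rewrite Sy Sz) ltac:(by rewrite Sy Sx).
have := Bnd j w Hw ltac:(by rewrite Ew Ey).
by rewrite -Sy leqNgt Sw.
Qed.
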